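(* Let $Q$ be a connected nicely-graded complete $\tau$-slice in an acyclic stable $n$-translation quiver $\overline Q$ with finitely many $\tau$-orbits. Then there is a sequence $\delta_1,\dots,\delta_r$ of $\tau$-mutations (each $\delta_t$ being $s^+_j$ for a source $j$, or $s^-_j$ for a sink $j$, of $\delta_{t-1}\cdots\delta_1Q$) such that the depth of $\delta_r\cdots\delta_1Q$ is $n$.
   Context: $k$ is a field. Bound quivers have relations that are linear combinations of paths of equal length $\ge2$ with common source and target; bound paths are paths nonzero in the quotient algebra. A stable $n$-translation quiver is the bound quiver of a graded self-injective algebra of Loewy length $n+2$ (generated in degrees $0,1$) with the bijection $\tau$ on vertices induced by the Nakayama permutation (each bound path of length $n+1$ goes from $\tau i$ to $i$). For $\overline Q$ acyclic with finitely many $\tau$-orbits, a complete $\tau$-slice is a convex full subquiver meeting each $\tau$-orbit in exactly one vertex; $\tau$-mutations: for a sink $j$, $s_j^-Q$ is the full subquiver on $(Q_0\setminus\{j\})\cup\{\tau j\}$; for a source $j$, $s_j^+Q$ is the full subquiver on $(Q_0\setminus\{j\})\cup\{\tau^{-1}j\}$; these are again complete $\tau$-slices. A connected quiver is nicely-graded if there is $u:Q_0\to\mathbb Z$ with $u(j)=u(i)+1$ for every arrow $i\to j$ (equivalently, every cyclic walk has zero grade, the grade of a walk being the number of arrows traversed forwards minus the number traversed backwards); such $u$ is unique up to an additive constant. The depth of a finite connected nicely-graded quiver is $\max_{Q_0}u-\min_{Q_0}u$. *)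

(* Defs.v *)
From HB Require Import structures.
From mathcomp Require Import all_boot all_algebra.
From Stdlib Require Import Relation_Operators.
Set Implicit Arguments. Unset Strict Implicit. Unset Printing Implicit Defensive.
Import GRing.Theory Num.Theory.
Local Open Scope ring_scope.

(* Paths are written
   left to right: (v, [:: a1; ...; am]) starts at v, a1 starts at v,
   a_(l+1) starts at the target of a_l.  (v, [::]) is the trivial path e_v. *)
Section Quiver.
Variables (V A : eqType) (src tgt : A -> V).

Definition qpath := (V * seq A)%type.

Fixpoint valid_from (v : V) (l : seq A) : bool :=
  if l is a :: l' then (src a == v) && valid_from (tgt a) l' else true.

Definition pvalid (p : qpath) : bool := valid_from p.1 p.2.
Definition pstart (p : qpath) : V := p.1.
Definition pend (p : qpath) : V := foldl (fun _ a => tgt a) p.1 p.2.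
Definition plen (p : qpath) : nat := size p.2.
Definition pverts (p : qpath) : seq V := p.1 :: map tgt p.2.
Definition pcomp (p q : qpath) : qpath := (p.1, p.2 ++ q.2).
Definition arrow_path (a : A) : qpath := (src a, [:: a]).

Definition acyclic : Prop :=
  forall p, pvalid p -> (0 < plen p)%N -> pend p <> pstart p.

(* bound quivers are locally finite *)
Definition locally_finite : Prop :=
  forall v, exists s : seq A, forall a, (src a == v) || (tgt a == v) -> a \in s.

Section Algebra.
Variable k : fieldType.

Definition lincomb := seq (k * qpath)%type.
Definition coef (f : lincomb) (p : qpath) : k := \sum_(x <- f | x.2 == p) x.1.
Definition lc_eq (f g : lincomb) : Prop := forall p, coef f p = coef g p.
Definition lc_path (p : qpath) : lincomb := [:: (1, p)].
Definition lc_mul3 (c : k) (u : qpath) (r : lincomb) (w : qpath) : lincomb :=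
  [seq (c * x.1, pcomp (pcomp u x.2) w) | x <- r].

Definition is_relation (r : lincomb) : Prop :=
  exists (i j : V) (l : nat), (2 <= l)%N /\
    forall x, x \in r -> [/\ pvalid x.2, pstart x.2 = i, pend x.2 = j & plen x.2 = l].

(* f lies in the two-sided ideal generated by the relations rho:
   f = sum_t c_t u_t r_t w_t with r_t in rho and u_t, w_t composable paths *)
Definition in_ideal (rho : lincomb -> Prop) (f : lincomb) : Prop :=
  exists g : seq (k * qpath * lincomb * qpath)%type,
    (forall y, y \in g ->
       [/\ rho y.1.2, pvalid y.1.1.2, pvalid y.2 &
           forall x, x \in y.1.2 -> pend y.1.1.2 = pstart x.2 /\ pend x.2 = pstart y.2])
    /\ lc_eq f (flatten [seq lc_mul3 y.1.1.1 y.1.1.2 y.1.2 y.2 | y <- g]).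

Definition bound_path (rho : lincomb -> Prop) (p : qpath) : Prop :=
  pvalid p /\ ~ in_ideal rho (lc_path p).

(* linear combination of (valid) paths from i to j, i.e. an element
   representing an element of e_j (kQ) e_i *)
Definition lc_from_to (i j : V) (f : lincomb) : Prop :=
  forall x, x \in f -> [/\ pvalid x.2, pstart x.2 = i & pend x.2 = j].

Definition bil (beta : qpath -> qpath -> k) (f g : lincomb) : k :=
  \sum_(x <- f) \sum_(y <- g) x.1 * y.1 * beta x.2 y.2.

(* The indecomposable projective P_a = Lambda e_a (at vertex x: paths a -> x
   modulo I) is isomorphic, as a Lambda-module (= representation of the bound
   quiver), to the indecomposable injective I_b = D(e_b Lambda) (at vertex x:
   the dual of paths x -> b modulo I).  Such an isomorphism is given by a
   family of pairings beta_x : (a -> x) x (x -> b) -> k that are well defined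
   modulo I, nondegenerate on both sides (bijectivity of each component) and
   compatible with the action of the arrows (module homomorphism). *)
Definition proj_iso_inj (rho : lincomb -> Prop) (a b : V) : Prop :=
  exists beta : qpath -> qpath -> k,
  [/\ (forall x f g, lc_from_to a x f -> lc_from_to x b g ->
          in_ideal rho f -> bil beta f g = 0),
      (forall x f g, lc_from_to a x f -> lc_from_to x b g ->
          in_ideal rho g -> bil beta f g = 0),
      (forall x f, lc_from_to a x f ->
          (forall g, lc_from_to x b g -> bil beta f g = 0) -> in_ideal rho f),
      (forall x g, lc_from_to x b g ->
          (forall f, lc_from_to a x f -> bil beta f g = 0) -> in_ideal rho g) &
      (forall (arr : A) (u v : qpath), pvalid u -> pvalid v ->
          pstart u = a -> pend u = src arr -> pstart v = tgt arr -> pend v = b ->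
          beta (pcomp u (arrow_path arr)) v = beta u (pcomp (arrow_path arr) v))].

(* (Q, rho, tau) is a stable n-translation quiver: the bound quiver of the
   graded algebra Lambda = kQ/(rho) (graded by path length, generated in
   degrees 0 and 1), which is self-injective of Loewy length n+2, with tau
   the bijection induced by the Nakayama permutation: P_(tau i) = I_i, so that
   bound paths of length n+1 go from tau i to i. *)
Definition stable_translation_quiver (n : nat) (rho : lincomb -> Prop)
    (tau : V -> V) : Prop :=
  [/\ locally_finite,
      (forall r, rho r -> is_relation r),
      bijective tau,
      (forall p, pvalid p -> plen p = n.+2 -> in_ideal rho (lc_path p)) /\
      (exists p, pvalid p /\ plen p = n.+1 /\ ~ in_ideal rho (lc_path p)) &
      (forall i, proj_iso_inj rho (tau i) i)].

End Algebra.

Section Slices.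
Variable tau : V -> V.

Definition same_orbit (v w : V) : Prop :=
  exists m : nat, iter m tau v = w \/ iter m tau w = v.

Definition finitely_many_orbits : Prop :=
  exists s : seq V, forall v, exists w, w \in s /\ same_orbit v w.

(* full subquivers are given by their vertex sets S *)
Definition convex (S : V -> Prop) : Prop :=
  forall p, pvalid p -> S (pstart p) -> S (pend p) ->
    forall v, v \in pverts p -> S v.

Definition complete_slice (S : V -> Prop) : Prop :=
  [/\ convex S,
      (forall v, exists w, S w /\ same_orbit v w) &
      (forall w w', S w -> S w' -> same_orbit w w' -> w = w')].

Definition adjS (S : V -> Prop) (x y : V) : Prop :=
  S x /\ S y /\ exists a, (src a = x /\ tgt a = y) \/ (src a = y /\ tgt a = x).

Definition connected (S : V -> Prop) : Prop :=
  (exists x, S x) /\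
  forall x y, S x -> S y -> clos_refl_trans V (adjS S) x y.

Definition nice_grading (S : V -> Prop) (u : V -> int) : Prop :=
  forall a, S (src a) -> S (tgt a) -> u (tgt a) = u (src a) + 1.

Definition nicely_graded (S : V -> Prop) : Prop :=
  connected S /\ exists u, nice_grading S u.

Definition has_depth (S : V -> Prop) (d : int) : Prop :=
  connected S /\ exists u, [/\ nice_grading S u,
     (exists x y, [/\ S x, S y & u y - u x = d]) &
     (forall x y, S x -> S y -> u y - u x <= d)].

Definition is_sink (S : V -> Prop) (j : V) : Prop :=
  S j /\ forall a, src a = j -> ~ S (tgt a).
Definition is_source (S : V -> Prop) (j : V) : Prop :=
  S j /\ forall a, tgt a = j -> ~ S (src a).

Definition tau_mutation (S S' : V -> Prop) : Prop :=
  exists j,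
    (is_sink S j /\ forall v, S' v <-> (S v /\ v <> j) \/ v = tau j) \/
    (is_source S j /\ forall v, S' v <-> (S v /\ v <> j) \/ tau v = j).

End Slices.
End Quiver.

(* Main.v *)
Require Import Defs.
From HB Require Import structures.
From mathcomp Require Import all_boot all_algebra.
From Stdlib Require Import Relation_Operators.
From mathcomp Require Import all_order zify ring.
From Stdlib Require Import Classical ClassicalEpsilon.
Import Order.TTheory GRing.Theory Num.Theory.

Notation pc := Defs.pcomp.

Module Part1.
Set Implicit Arguments. Unset Strict Implicit. Unset Printing Implicit Defensive.
Local Open Scope ring_scope.


Section Paths.
Variables (V A : eqType) (src tgt : A -> V).
Notation qp := (qpath V A).
Definition ee (v : V) : qp := (v, [::]).
Definition fend v (l : seq A) := foldl (fun _ a => tgt a) v l.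

Lemma valid_from_cat v l1 l2 :
  valid_from src tgt v (l1 ++ l2) = valid_from src tgt v l1 && valid_from src tgt (fend v l1) l2.
Proof. by elim: l1 v => [|a l IH] v //=; rewrite IH andbA. Qed.

Lemma fend_cat v l1 l2 : fend v (l1 ++ l2) = fend (fend v l1) l2.
Proof. by rewrite /fend foldl_cat. Qed.

Lemma pend_pc (p q : qp) : pend tgt p = pstart q -> pend tgt (pc p q) = pend tgt q.
Proof. by case: p q => v l [w m] /= E; rewrite /pend /= foldl_cat -/(fend _ _) /=; rewrite -E. Qed.

Lemma pstart_pc (p q : qp) : pstart (pc p q) = pstart p.
Proof. by []. Qed.

Lemma plen_pc (p q : qp) : plen (pc p q) = (plen p + plen q)%N.
Proof. by rewrite /plen /= size_cat. Qed.

Lemma pvalid_pc (p q : qp) : pvalid src tgt p -> pvalid src tgt q -> pend tgt p = pstart q ->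
  pvalid src tgt (pc p q).
Proof.
case: p q => v l [w m]; rewrite /pvalid /pend /pstart /= => H1 H2 E.
by rewrite valid_from_cat H1 /fend E.
Qed.

Lemma pc_assoc (p q r : qp) : pc (pc p q) r = pc p (pc q r).
Proof. by rewrite /pc /= catA. Qed.

Lemma plen0 (p : qp) : plen p = 0%N -> pend tgt p = pstart p.
Proof. by case: p => v [|]. Qed.

Lemma plen0' (p : qp) : plen p = 0%N -> p = ee (pstart p).
Proof. by case: p => v [|]. Qed.

Lemma plen1 (p : qp) : pvalid src tgt p -> plen p = 1%N ->
  exists a, [/\ p = arrow_path src a, src a = pstart p & tgt a = pend tgt p].
Proof.
case: p => v [|a [|b l]] //= /andP[/eqP sa _] _; exists a; split => //.
by rewrite /arrow_path sa.
Qed.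

Lemma pc_e (p : qp) : pc p (ee (pend tgt p)) = p.
Proof. by case: p => v l; rewrite /pc /= cats0. Qed.

Lemma e_pc (p : qp) : pc (ee (pstart p)) p = p.
Proof. by case: p. Qed.

Lemma psplit (p : qp) m : pvalid src tgt p -> (m <= plen p)%N ->
  exists p1 p2, [/\ p = pc p1 p2, pvalid src tgt p1, pvalid src tgt p2 & plen p1 = m] /\
     [/\ pstart p1 = pstart p, pend tgt p1 = pstart p2 & pend tgt p2 = pend tgt p].
Proof.
case: p => v l; rewrite /pvalid /= => Hv Hm.
exists (v, take m l), (fend v (take m l), drop m l).
have E : l = take m l ++ drop m l by rewrite cat_take_drop.
move: Hv; rewrite {1}E valid_from_cat => /andP[H1 H2].
split; last by split => //; rewrite /pend /= -/(fend _ _) -fend_cat -E.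
split => //; first by rewrite /pc /= -E.
by rewrite /plen /= size_take; move: Hm; rewrite /plen /=; case: ltngtP.
Qed.

Lemma pend_in (p : qp) : pend tgt p \in pverts tgt p.
Proof.
case: p => v l; rewrite /pend /pverts /=.
elim: l v => [|a l IH] v /=; first by rewrite mem_seq1.
by rewrite in_cons; apply/orP; right; apply: IH.
Qed.

Lemma pstart_in (p : qp) : pstart p \in pverts tgt p.
Proof. by case: p => v l; rewrite /pverts mem_head. Qed.

Lemma pverts_pcl (p q : qp) x : x \in pverts tgt p -> x \in pverts tgt (pc p q).
Proof. by case: p q => v l [w m]; rewrite /pverts /= map_cat -cat_cons mem_cat => ->. Qed.

Lemma pverts_pcr (p q : qp) x : pend tgt p = pstart q ->
  x \in pverts tgt q -> x \in pverts tgt (pc p q).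
Proof.
case: p q => v l [w m]; rewrite /pverts /pend /pstart /= map_cat -cat_cons mem_cat => E.
rewrite in_cons => /orP[/eqP->|->]; last by rewrite orbT.
apply/orP; left; rewrite -E; exact: (pend_in (v, l)).
Qed.

Lemma path_grade (P : V -> Prop) (u : V -> int) : nice_grading src tgt P u ->
  forall v l, valid_from src tgt v l -> (forall x, x \in v :: map tgt l -> P x) ->
  u (fend v l) = u v + (size l)%:Z /\
  forall x, x \in v :: map tgt l -> u v <= u x <= u v + (size l)%:Z.
Proof.
move=> Hu v l; elim: l v => [|a l IH] v /=.
  move=> _ _; split; first by rewrite addr0.
  by move=> x; rewrite mem_seq1 => /eqP->; rewrite addr0 lexx.
move=> /andP[/eqP sa Hv] HP.
have Ha : u (tgt a) = u v + 1.
  rewrite -sa; apply: Hu; first by rewrite sa; apply: HP; exact: mem_head.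
  by apply: HP; rewrite !in_cons eqxx orbT.
have [IH1 IH2] := IH (tgt a) Hv (fun x hx => HP x (@mem_behead _ (v :: _) _ hx)).
split; first by rewrite /fend /= -/(fend _ _) IH1 Ha; lia.
move=> x; rewrite in_cons => /orP[/eqP->|hx]; first lia.
have := IH2 x hx; rewrite Ha; lia.
Qed.

Lemma path_grade_p (P : V -> Prop) (u : V -> int) (p : qp) : nice_grading src tgt P u ->
  pvalid src tgt p -> (forall x, x \in pverts tgt p -> P x) ->
  u (pend tgt p) = u (pstart p) + (plen p)%:Z /\
  forall x, x \in pverts tgt p -> u (pstart p) <= u x <= u (pstart p) + (plen p)%:Z.
Proof. case: p => v l Hu Hv HP; exact: (path_grade Hu Hv HP). Qed.

End Paths.
Arguments ee {V A} v.

End Part1.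
Import Part1.

Module Part2.
Set Implicit Arguments. Unset Strict Implicit. Unset Printing Implicit Defensive.
Local Open Scope ring_scope.


Section Alg.
Variables (k : fieldType) (V A : eqType) (src tgt : A -> V) (rho : lincomb V A k -> Prop).
Hypothesis Hrel : forall r, rho r -> is_relation src tgt r.
Notation qp := (qpath V A).
Notation lc := (lincomb V A k).
Notation ideal := (in_ideal src tgt rho).

Lemma coef_flatten (T : Type) (F : T -> lc) (g : seq T) p :
  coef (flatten (map F g)) p = \sum_(y <- g) coef (F y) p.
Proof. by rewrite /coef big_flatten big_map. Qed.

Lemma coef0 (f : lc) p : (forall x, x \in f -> x.2 != p) -> coef f p = 0.
Proof. by move=> H; rewrite /coef big_seq_cond big1 // => x /andP[/H /negbTE ->]. Qed.

Definition ylen (y : k * qp * lc * qp) :=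
  (plen y.1.1.2 + plen (head (0%R, y.1.1.2) y.1.2).2 + plen y.2)%N.

Lemma mul3_len c u r w x : rho r -> x \in lc_mul3 c u r w ->
  plen x.2 = ylen (c, u, r, w) /\ (2 <= plen x.2)%N.
Proof.
move=> /Hrel [i [j [l [Hl Hr]]]] /mapP [x0 Hx0 ->] /=.
have [_ _ _ E0] := Hr x0 Hx0.
have Hh : head (0%R, u) r \in r by case: r Hr Hx0 {Hl} => //= *; exact: mem_head.
have [_ _ _ E1] := Hr _ Hh.
rewrite /ylen /= !plen_pc E0 E1; split => //; lia.
Qed.

Lemma lc_path_coef (p : qp) : coef (lc_path k p) p = 1.
Proof. by rewrite /coef /lc_path big_cons eqxx big_nil addr0. Qed.

Lemma short_not_ideal (p : qp) : (plen p <= 1)%N -> ~ ideal (lc_path k p).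
Proof.
move=> Hp [g [Hg Heq]]; have := Heq p; rewrite lc_path_coef coef_flatten.
rewrite big_seq big1; first by move/eqP; rewrite oner_eq0.
move=> y /Hg [Hr _ _ _]; apply: coef0 => x Hx; have [_ H2] := mul3_len Hr Hx.
by apply/eqP => E; move: H2; rewrite E; lia.
Qed.

Lemma ideal_hom l (f : lc) : ideal f -> ideal (filter (fun x => plen x.2 == l) f).
Proof.
move=> [g [Hg Heq]]; exists (filter (fun y => ylen y == l) g); split.
  by move=> y; rewrite mem_filter => /andP[_ /Hg].
have Hz : forall y p, y \in g -> plen p != ylen y ->
    coef (lc_mul3 y.1.1.1 y.1.1.2 y.1.2 y.2) p = 0.
  move=> [[[c u] r] w] p /Hg [Hr _ _ _] /= Hne; apply: coef0 => x Hx.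
  have [H1 _] := mul3_len Hr Hx; apply/eqP => E; move: Hne; rewrite -E H1; by rewrite eqxx.
move=> p; rewrite coef_flatten /coef big_filter_cond big_filter.
case: (eqVneq (plen p) l) => Hpl.
  rewrite (eq_bigl (fun x => x.2 == p)); last first.
    by move=> x /=; case: (eqVneq x.2 p) => [->|]; rewrite ?andbT ?andbF // Hpl eqxx.
  rewrite -/(coef f p) Heq coef_flatten [RHS]big_mkcond /=.
  apply: eq_big_seq => y Hy; case: eqP => // Hyl.
  by rewrite Hz // Hpl; apply/eqP => E; apply: Hyl; rewrite E.
rewrite big1; last by move=> x /andP[/eqP Hx /eqP Ex]; move: Hpl; rewrite -Ex Hx eqxx.
rewrite big_seq_cond big1 // => y /andP[Hy /eqP Hyl].
by apply: (Hz y p Hy); rewrite Hyl.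
Qed.

Definition pii (a b : V) (beta : qp -> qp -> k) : Prop :=
  [/\ (forall x f g, lc_from_to src tgt a x f -> lc_from_to src tgt x b g ->
          ideal f -> bil beta f g = 0),
      (forall x f g, lc_from_to src tgt a x f -> lc_from_to src tgt x b g ->
          ideal g -> bil beta f g = 0),
      (forall x f, lc_from_to src tgt a x f ->
          (forall g, lc_from_to src tgt x b g -> bil beta f g = 0) -> ideal f),
      (forall x g, lc_from_to src tgt x b g ->
          (forall f, lc_from_to src tgt a x f -> bil beta f g = 0) -> ideal g) &
      (forall (arr : A) (u v : qp), pvalid src tgt u -> pvalid src tgt v ->
          pstart u = a -> pend tgt u = src arr -> pstart v = tgt arr -> pend tgt v = b ->
          beta (pc u (arrow_path src arr)) v = beta u (pc (arrow_path src arr) v))].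

Lemma pii_iso a b : proj_iso_inj src tgt rho a b -> exists beta, pii a b beta.
Proof. by []. Qed.

Lemma bil11 (beta : qp -> qp -> k) f g : bil beta (lc_path k f) (lc_path k g) = beta f g.
Proof. by rewrite /bil /lc_path !big_seq1 /= !mul1r. Qed.

Lemma lcft1 a b (p : qp) : pvalid src tgt p -> pstart p = a -> pend tgt p = b ->
  lc_from_to src tgt a b (lc_path k p).
Proof. by move=> H1 H2 H3 x; rewrite mem_seq1 => /eqP->. Qed.

Section Beta.
Variables (a b : V) (beta : qp -> qp -> k).
Hypothesis Hb : pii a b beta.

Definition NZb (p : qp) := [/\ pvalid src tgt p, pstart p = a, pend tgt p = b & beta p (ee b) != 0].

Lemma beta_shift_aux l (f : qp) w : valid_from src tgt w l -> pvalid src tgt f -> pstart f = a ->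
  pend tgt f = w -> fend tgt w l = b -> beta f (w, l) = beta (pc f (w, l)) (ee b).
Proof.
case: Hb => _ _ _ _ H5.
elim: l f w => [|x l IH] f w /=.
  by move=> _ _ _ _ <-; rewrite /pc /= cats0; case: f.
move=> /andP[/eqP sx Hv] Hf Hfa Hfw Hend.
have E : pc (arrow_path src x) (tgt x, l) = (w, x :: l) by rewrite /pc /arrow_path /= sx.
have Hf' : pvalid src tgt (pc f (arrow_path src x)).
  apply: pvalid_pc => //; first by rewrite /pvalid /= eqxx.
  by rewrite Hfw.
rewrite -E -H5 //; last by rewrite Hfw.
rewrite IH ?pc_assoc // pend_pc // /pend /=.
by rewrite -/(pend tgt f) Hfw.
Qed.

Lemma beta_shift (f g : qp) : pvalid src tgt f -> pvalid src tgt g -> pstart f = a ->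
  pend tgt f = pstart g -> pend tgt g = b -> beta f g = beta (pc f g) (ee b).
Proof. case: g => w l Hf Hg Ha He Hb'; exact: (beta_shift_aux Hg Hf Ha He Hb'). Qed.

Lemma nz_not_ideal (f g : qp) x : pvalid src tgt f -> pvalid src tgt g -> pstart f = a ->
  pend tgt f = x -> pstart g = x -> pend tgt g = b -> beta f g != 0 ->
  ~ ideal (lc_path k f) /\ ~ ideal (lc_path k g).
Proof.
case: Hb => H1 H2 _ _ _ Hf Hg Hfa Hfx Hgx Hgb Hne; split => Hi.
  by move: Hne; rewrite -bil11 (H1 x) ?eqxx //; apply: lcft1.
by move: Hne; rewrite -bil11 (H2 x) ?eqxx //; apply: lcft1.
Qed.

Lemma NZb_split (f g : qp) : pvalid src tgt f -> pvalid src tgt g -> pend tgt f = pstart g ->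
  NZb (pc f g) -> ~ ideal (lc_path k f) /\ ~ ideal (lc_path k g).
Proof.
move=> Hf Hg E [_ Hs He Hne].
have Hfa : pstart f = a by rewrite -Hs.
have Hgb : pend tgt g = b by rewrite -He pend_pc.
apply: (nz_not_ideal Hf Hg Hfa erefl (esym E) Hgb).
by rewrite (beta_shift Hf Hg).
Qed.



Lemma bil_nz (f g : lc) : bil beta f g != 0 -> exists x y, [/\ x \in f, y \in g & beta x.2 y.2 != 0].
Proof.
move=> H; apply: Classical_Prop.NNPP => Hn; move: H; rewrite /bil big_seq big1 ?eqxx // => x Hx.
rewrite big_seq big1 // => y Hy.
case: (eqVneq (beta x.2 y.2) 0) => [->|Hne]; first by rewrite mulr0.
by case: Hn; exists x, y.
Qed.

Lemma ext_right (f : qp) : pvalid src tgt f -> pstart f = a -> ~ ideal (lc_path k f) ->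
  exists g, [/\ pvalid src tgt g, pstart g = pend tgt f & NZb (pc f g)].
Proof.
case: Hb => _ _ H3 _ _ Hf Hfa Hni; apply: Classical_Prop.NNPP => Hn; apply: Hni.
apply: (H3 (pend tgt f)); first exact: lcft1.
move=> g Hg; apply/eqP; apply: Classical_Prop.NNPP => /negP Hne.
have [x [y [Hx Hy Hxy]]] := bil_nz Hne.
move: Hx; rewrite mem_seq1 => /eqP Ex; subst x.
have [Hyv Hys Hye] := Hg y Hy.
apply: Hn; exists y.2; split => //; split => //.
- by apply: pvalid_pc.
- by rewrite pend_pc.
- by rewrite -(beta_shift Hf Hyv).
Qed.

Lemma ext_left (g : qp) : pvalid src tgt g -> pend tgt g = b -> ~ ideal (lc_path k g) ->
  exists f, [/\ pvalid src tgt f, pend tgt f = pstart g & NZb (pc f g)].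
Proof.
case: Hb => _ _ _ H4 _ Hg Hgb Hni; apply: Classical_Prop.NNPP => Hn; apply: Hni.
apply: (H4 (pstart g)); first exact: lcft1.
move=> f Hf; apply/eqP; apply: Classical_Prop.NNPP => /negP Hne.
have [x [y [Hx Hy Hxy]]] := bil_nz Hne.
move: Hy; rewrite mem_seq1 => /eqP Ey; subst y.
have [Hxv Hxs Hxe] := Hf x Hx.
apply: Hn; exists x.2; split => //; split => //.
- by apply: pvalid_pc.
- by rewrite pend_pc.
- by rewrite -(beta_shift Hxv Hg).
Qed.

Hypothesis Hacyc : acyclic src tgt.

Lemma loop_trivial (p : qp) : pvalid src tgt p -> pend tgt p = pstart p -> p = ee (pstart p).
Proof.
move=> Hv He; apply: plen0'; case: (posnP (plen p)) => // Hl.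
by case: (Hacyc Hv Hl).
Qed.

Lemma NZb_len (p q : qp) : NZb p -> NZb q -> plen p = plen q.
Proof.
move=> Hp Hq; apply: Classical_Prop.NNPP => Hne.
case: Hb => H1 _ H3 _ _.
case: (Hp) => Hpv Hps Hpe Hpn; case: (Hq) => Hqv Hqs Hqe Hqn.
set Bp := beta p (ee b); set Bq := beta q (ee b).
pose f : lc := [:: (Bq, p); (- Bp, q)].
have Hf : lc_from_to src tgt a b f.
  by move=> x; rewrite !in_cons orbF => /orP[] /eqP ->.
have Hi : ideal f.
  apply: (H3 b) => // g Hg.
  have Hy : forall y, y \in g -> y.2 = ee b.
    move=> y /Hg [Hyv Hys Hye]; rewrite (loop_trivial Hyv) ?Hys //; by rewrite Hye.
  rewrite /bil big_cons big_cons big_nil addr0 /= -big_split /=.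
  rewrite big_seq big1 // => y /Hy ->; rewrite -/Bp -/Bq; ring.
have := ideal_hom (plen p) Hi; rewrite /f /= eqxx.
have -> : (plen q == plen p) = false by apply/eqP => E; apply: Hne.
move=> Hi'.
have := H1 b _ (lc_path k (ee b)) _ _ Hi'.
rewrite /bil big_seq1 /lc_path big_seq1 /= mulr1 => E.
have : Bq * Bp = 0 by apply: E => //; [move=> x; rewrite mem_seq1 => /eqP -> | exact: lcft1].
by apply/eqP; rewrite mulf_neq0.
Qed.

Variable n : nat.
Hypothesis Hrad : forall p, pvalid src tgt p -> plen p = n.+2 -> ideal (lc_path k p).

Lemma NZb_le (p : qp) : NZb p -> (plen p <= n.+1)%N.
Proof.
move=> [Hv Hs He Hn]; rewrite leqNgt; apply/negP => Hlt.
have [p1 [p2 [[E Hv1 Hv2 Hl1] [Hs1 He1 He2]]]] := psplit Hv Hlt.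
have [Hni _] : ~ ideal (lc_path k p1) /\ ~ ideal (lc_path k p2).
  apply: (nz_not_ideal Hv1 Hv2 _ erefl (esym He1)); first by rewrite Hs1.
  - by rewrite He2.
  - by rewrite (beta_shift Hv1 Hv2) -?E // ?Hs1 ?He2.
by apply: Hni; apply: Hrad.
Qed.

End Beta.
End Alg.

End Part2.
Import Part2.

Module Part3.
Unset Implicit Arguments. Unset Printing Implicit Defensive.


Section Comb1.
Variables (k : fieldType) (V A : eqType) (src tgt : A -> V) (n : nat)
  (rho : lincomb V A k -> Prop) (tau ti : V -> V) (S : V -> Prop).
Notation qp := (qpath V A).
Hypothesis Hrel : forall r, rho r -> is_relation src tgt r.
Hypothesis Htk : cancel tau ti.
Hypothesis Hkt : cancel ti tau.
Hypothesis Hrad : forall p, pvalid src tgt p -> plen p = n.+2 -> in_ideal src tgt rho (lc_path k p).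
Hypothesis Hex : exists p, pvalid src tgt p /\ plen p = n.+1 /\ ~ in_ideal src tgt rho (lc_path k p).
Hypothesis Hac : acyclic src tgt.
Hypothesis Hsl : complete_slice src tgt tau S.
Hypothesis Hcon : connected src tgt S.
Variable B : V -> qp -> qp -> k.
Hypothesis HB : forall i, pii src tgt rho (tau i) i (B i).

Definition NZ i p := NZb src tgt (tau i) i (B i) p.
Definition Nonzero (p : qp) := ~ in_ideal src tgt rho (lc_path k p).

Lemma noloop (b : A) : src b <> tgt b.
Proof.
move=> E; apply: (Hac (arrow_path src b)) => //; first by rewrite /pvalid /= eqxx.
Qed.

Lemma arrow_valid (b : A) : pvalid src tgt (arrow_path src b).
Proof. by rewrite /pvalid /= eqxx. Qed.

Lemma arrow_nz (b : A) : Nonzero (arrow_path src b).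
Proof. exact: short_not_ideal. Qed.

Lemma F_A i : exists p, NZ i p.
Proof.
have [f [Hf Hfe Hnz]] := ext_left (HB i) (g := ee i) erefl erefl (short_not_ideal Hrel (p := ee i) erefl).
by exists (pc f (ee i)).
Qed.

Definition D i := plen (proj1_sig (constructive_indefinite_description _ (F_A i))).

Lemma NZ_D i p : NZ i p -> plen p = D i.
Proof.
rewrite /D; case: constructive_indefinite_description => q Hq /= Hp.
exact: (NZb_len Hrel (HB i) Hac Hp Hq).
Qed.

Lemma NZ_facts i p : NZ i p -> [/\ pvalid src tgt p, pstart p = tau i & pend tgt p = i].
Proof. by case. Qed.

Lemma arrow_a (b : A) : exists f, [/\ pvalid src tgt f, pend tgt f = src b &
   NZ (tgt b) (pc f (arrow_path src b))].
Proof. have := (ext_left (HB (tgt b)) (arrow_valid b) erefl (arrow_nz b)). move=> H. exact H. Qed.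

Lemma arrow_b (b : A) : exists g, [/\ pvalid src tgt g, pstart g = tgt b &
   NZ (ti (src b)) (pc (arrow_path src b) g)].
Proof.
have [g [Hg Hgs Hnz]] := ext_right (HB (ti (src b))) (arrow_valid b) (esym (Hkt (src b))) (arrow_nz b).
by exists g.
Qed.

Lemma D_arrow (b : A) : (D (tgt b) <= D (src b))%N /\ (D (ti (src b)) <= D (ti (tgt b)))%N.
Proof.
split.
  have [f [Hf Hfe Hnz]] := arrow_a b.
  have [Hnf _] := NZb_split (HB _) Hf (arrow_valid b) Hfe Hnz.
  have [f' [Hf' Hf'e Hnz']] := ext_left (HB (src b)) Hf Hfe Hnf.
  rewrite -(NZ_D _ _ Hnz) -(NZ_D _ _ Hnz') !plen_pc /plen /=.
  have : plen f' <> 0%N.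
    move=> H0; have E : pend tgt f' = pstart f' by apply: plen0.
    have [_ Hs He] := NZ_facts _ _ Hnz'.
    have [_ Hs2 He2] := NZ_facts _ _ Hnz.
    rewrite pstart_pc in Hs Hs2.
    apply: (noloop b); apply: (can_inj Htk).
    by rewrite -Hs -Hs2 -E Hf'e.
  rewrite /plen; lia.
have [g [Hg Hgs Hnz]] := arrow_b b.
have [_ Hng] := NZb_split (HB _) (arrow_valid b) Hg (esym Hgs) Hnz.
have [h [Hh Hhs Hnz']] := ext_right (HB (ti (tgt b))) Hg (etrans Hgs (esym (Hkt _))) Hng.
rewrite -(NZ_D _ _ Hnz) -(NZ_D _ _ Hnz') !plen_pc /plen /=.
have : plen h <> 0%N.
  move=> H0; have E : pend tgt h = pstart h by apply: plen0.
  have [_ Hs He] := NZ_facts _ _ Hnz'.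
  have [_ Hs2 He2] := NZ_facts _ _ Hnz.
  move: He He2; rewrite !pend_pc // E -Hhs => He He2.
  apply: (noloop b); apply: (can_inj Hkt).
  by rewrite -He2 -He.
rewrite /plen; lia.
Qed.

Lemma D_path v l : valid_from src tgt v l ->
  (D (fend tgt v l) <= D v)%N /\ (D (ti v) <= D (ti (fend tgt v l)))%N.
Proof.
elim: l v => [|a l IH] v /=; first by rewrite /fend /=; split.
move=> /andP[/eqP sa Hv]; have [IH1 IH2] := IH _ Hv.
have [H1 H2] := D_arrow a; rewrite sa in H1 H2.
rewrite /fend /= -/(fend tgt (tgt a) l); split; lia.
Qed.

Lemma D_tau x : D (tau x) = D x /\ D (ti x) = D x.
Proof.
have Hgen : forall y, (D y <= D (tau y))%N /\ (D y <= D (ti y))%N.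
  move=> y; have [p Hp] := F_A y; have [Hv Hs He] := NZ_facts _ _ Hp.
  move: Hv Hs He; case: p {Hp} => v l Hv Hs He.
  have [H1 H2] := D_path _ _ Hv.
  have E1 : fend tgt v l = y := He. have E2 : v = tau y := Hs.
  rewrite E1 E2 Htk in H1 H2; simpl in H1; split; lia.
have [a1 a2] := Hgen x; have [b1 b2] := Hgen (tau x); have [c1 c2] := Hgen (ti x).
rewrite Htk in b2; rewrite Hkt in c1; split; lia.
Qed.

Lemma D_arrow_eq (b : A) : D (src b) = D (tgt b).
Proof.
have [H1 H2] := D_arrow b; have [_ E1] := D_tau (src b); have [_ E2] := D_tau (tgt b); lia.
Qed.

Lemma D_iter m x : D (iter m tau x) = D x.
Proof. elim: m => //= m IH; have [E _] := D_tau (iter m tau x); lia. Qed.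

Lemma D_orbit x y : same_orbit tau x y -> D x = D y.
Proof. by move=> [m [<-|<-]]; rewrite D_iter. Qed.

Lemma D_const x y : D x = D y.
Proof.
case: Hsl => _ Hrep _; case: Hcon => _ Hc.
have [s [Ss Os]] := Hrep x; have [t [St Ot]] := Hrep y.
rewrite (D_orbit _ _ Os) (D_orbit _ _ Ot).
elim: (Hc s t Ss St) => //; last by move=> ? ? ? _ -> _ ->.
move=> u v [_ [_ [b [[<- <-]|[<- <-]]]]]; [|symmetry]; exact: D_arrow_eq.
Qed.

Lemma D_n x : D x = n.+1.
Proof.
case: Hex => p [Hp [Hl Hnz]].
have [g [Hg Hgs Hnz']] := ext_right (HB (ti (pstart p))) Hp (esym (Hkt _)) Hnz.
have := NZb_le (HB _) Hrad Hnz'; rewrite (NZ_D _ _ Hnz') (D_const _ x) => H1.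
have := NZ_D _ _ Hnz'; rewrite plen_pc Hl (D_const _ x) => H2; lia.
Qed.

Lemma K_tau (b : A) : exists b', src b' = tau (src b) /\ tgt b' = tau (tgt b).
Proof.
have [f [Hf Hfe Hnz]] := arrow_a b.
have [Hnf _] := NZb_split (HB _) Hf (arrow_valid b) Hfe Hnz.
have [f' [Hf' Hf'e Hnz']] := ext_left (HB (src b)) Hf Hfe Hnf.
have L1 := NZ_D _ _ Hnz; have L2 := NZ_D _ _ Hnz'; rewrite !plen_pc !D_n in L1 L2.
have Hl1 : plen f' = 1%N by move: L1 L2; rewrite /plen /=; lia.
have [b' [E Hs He]] := plen1 Hf' Hl1; exists b'; split.
  by rewrite Hs; have [_ <- _] := NZ_facts _ _ Hnz'.
rewrite He Hf'e; have [_ Hs2 _] := NZ_facts _ _ Hnz; by rewrite -Hs2.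
Qed.

Lemma K_ti (b : A) : exists b', src b' = ti (src b) /\ tgt b' = ti (tgt b).
Proof.
have [g [Hg Hgs Hnz]] := arrow_b b.
have [_ Hng] := NZb_split (HB _) (arrow_valid b) Hg (esym Hgs) Hnz.
have [h [Hh Hhs Hnz']] := ext_right (HB (ti (tgt b))) Hg (etrans Hgs (esym (Hkt _))) Hng.
have L1 := NZ_D _ _ Hnz; have L2 := NZ_D _ _ Hnz'; rewrite !plen_pc !D_n in L1 L2.
have Hl1 : plen h = 1%N by move: L1 L2; rewrite /plen /=; lia.
have [b' [E Hs He]] := plen1 Hh Hl1; exists b'; split.
  rewrite Hs Hhs; have [_ _ <-] := NZ_facts _ _ Hnz; by rewrite pend_pc // Hgs.
rewrite He; have [_ _ <-] := NZ_facts _ _ Hnz'; by rewrite pend_pc.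
Qed.

Lemma K_mesh (b : A) : exists f, [/\ pvalid src tgt f, pstart f = tau (tgt b),
  pend tgt f = src b & plen f = n].
Proof.
have [f [Hf Hfe Hnz]] := arrow_a b; exists f; split => //.
  by have [_ <- _] := NZ_facts _ _ Hnz.
have := NZ_D _ _ Hnz; rewrite plen_pc D_n /plen /=; lia.
Qed.

Lemma K_orbit x : exists p, [/\ pvalid src tgt p, pstart p = tau x,
  pend tgt p = x & plen p = n.+1].
Proof. have [p Hp] := F_A x; exists p; have [? ? ?] := NZ_facts _ _ Hp; split => //; by rewrite (NZ_D _ _ Hp) D_n. Qed.

End Comb1.

End Part3.
Import Part3.

Module Part4.
Unset Implicit Arguments. Unset Printing Implicit Defensive.
Local Open Scope ring_scope.


Lemma has_depth_iff (V A : eqType) (src tgt : A -> V) (P Q : V -> Prop) d :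
  (forall v, P v <-> Q v) -> has_depth src tgt P d -> has_depth src tgt Q d.
Proof.
move=> H [[[x Px] Hc] [u [Hu [x1 [y1 [P1 P2 E]]] Hle]]].
have Hadj : forall a b, adjS src tgt P a b -> adjS src tgt Q a b.
  by move=> a b [Pa [Pb h]]; split; [apply/H | split; [apply/H|]].
split.
  split; first by exists x; apply/H.
  move=> a b /H Pa /H Pb; elim: (Hc a b Pa Pb) => [p q /Hadj|p|p q r _ H1 _ H2].
  - exact: rt_step.
  - exact: rt_refl.
  - exact: rt_trans H1 H2.
exists u; split.
- by move=> a /H h1 /H h2; apply: Hu.
- by exists x1, y1; split => //; apply/H.
- by move=> a b /H h1 /H h2; apply: Hle.
Qed.

Section Comb2.
Variables (V A : eqType) (src tgt : A -> V) (n : nat) (tau ti : V -> V) (S : V -> Prop).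
Notation qp := (qpath V A).
Hypothesis Htk : cancel tau ti.
Hypothesis Hkt : cancel ti tau.
Hypothesis Hac : acyclic src tgt.
Hypothesis Hsl : complete_slice src tgt tau S.
Hypothesis Hcon : connected src tgt S.
Variable u : V -> int.
Hypothesis Hu : nice_grading src tgt S u.
Hypothesis Hfin : finitely_many_orbits tau.
Hypothesis K_tau : forall b : A, exists b', src b' = tau (src b) /\ tgt b' = tau (tgt b).
Hypothesis K_ti : forall b : A, exists b', src b' = ti (src b) /\ tgt b' = ti (tgt b).
Hypothesis K_mesh : forall b : A, exists f, [/\ pvalid src tgt f, pstart f = tau (tgt b),
  pend tgt f = src b & plen f = n].
Hypothesis K_orbit : forall x, exists p, [/\ pvalid src tgt p, pstart p = tau x,
  pend tgt p = x & plen p = n.+1].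

Notation orb := (same_orbit tau).

Lemma iter_tk m x : iter m ti (iter m tau x) = x.
Proof. by elim: m x => // m IH x; rewrite iterSr iterS Htk IH. Qed.

Lemma iter_kt m x : iter m tau (iter m ti x) = x.
Proof. by elim: m x => // m IH x; rewrite iterSr iterS Hkt IH. Qed.

Lemma iter_inj m x y : iter m tau x = iter m tau y -> x = y.
Proof. by move=> E; rewrite -(iter_tk m x) E iter_tk. Qed.

Lemma path_iter m x : exists p, [/\ pvalid src tgt p, pstart p = iter m tau x,
  pend tgt p = x & plen p = (m * n.+1)%N].
Proof.
elim: m => [|m [p [Hv Hs He Hl]]]; first by exists (ee x); split.
have [q [Hqv Hqs Hqe Hql]] := K_orbit (iter m tau x).
exists (pc q p); split.
- by apply: pvalid_pc => //; rewrite Hqe Hs.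
- by rewrite pstart_pc Hqs.
- by rewrite pend_pc // Hqe Hs.
- by rewrite plen_pc Hql Hl mulSn.
Qed.

Lemma no_fix m x : iter m tau x = x -> m = 0%N.
Proof.
move=> E; have [p [Hv Hs He Hl]] := path_iter m x.
case: (posnP (plen p)) => Hp; first by move: Hl; rewrite Hp; case: m {E Hs} => //.
by case: (Hac p Hv Hp); rewrite He Hs E.
Qed.

Lemma iter_eq a b x : iter a tau x = iter b tau x -> a = b.
Proof.
wlog Hab : a b / (a <= b)%N.
  by move=> H E; case: (leqP a b) => h; [apply: H | symmetry; apply: H => //; apply: ltnW].
move=> E; rewrite -(subnKC Hab) iterD in E.
have := no_fix _ _ (esym (iter_inj _ _ _ E)); lia.
Qed.

Lemma orb_refl x : orb x x.
Proof. by exists 0%N; left. Qed.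

Lemma orb_sym x y : orb x y -> orb y x.
Proof. by move=> [m [E|E]]; exists m; [right|left]. Qed.

Lemma orb_trans x y z : orb x y -> orb y z -> orb x z.
Proof.
move=> [a [E1|E1]] [b [E2|E2]].
- by exists (b + a)%N; left; rewrite iterD E1.
- case: (leqP a b) => h.
    exists (b - a)%N; right; apply: (iter_inj a).
    by rewrite -iterD (_ : (a + (b - a) = b)%N) ?E1 ?E2 //; lia.
  exists (a - b)%N; left; apply: (iter_inj b).
  by rewrite -iterD (_ : (b + (a - b) = a)%N) ?E1 ?E2 //; lia.
- case: (leqP a b) => h.
    by exists (b - a)%N; left; rewrite -E2 -E1 -iterD (_ : (b - a + a = b)%N) //; lia.
  by exists (a - b)%N; right; rewrite -E2 -E1 -iterD (_ : (a - b + b = a)%N) //; lia.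
- by exists (a + b)%N; right; rewrite iterD E2 E1.
Qed.

Lemma orb_iter m x : orb x (iter m tau x).
Proof. by exists m; left. Qed.

Lemma orb_iti m x : orb x (iter m ti x).
Proof. by exists m; right; rewrite iter_kt. Qed.

Lemma S_unique x y : S x -> S y -> orb x y -> x = y.
Proof. by case: Hsl => _ _ H; apply: H. Qed.

Lemma S_convex p : pvalid src tgt p -> S (pstart p) -> S (pend tgt p) ->
  forall v, v \in pverts tgt p -> S v.
Proof. by case: Hsl => H _ _; apply: H. Qed.

Definition Lv v (z : int) := exists w m, S w /\
  ((iter m tau v = w /\ z = u w + (m * n.+1)%N%:Z) \/ (iter m tau w = v /\ z = u w - (m * n.+1)%N%:Z)).

Lemma Lv_ex v : exists z, Lv v z.
Proof.
case: Hsl => _ H _; have [w [Sw [m [E|E]]]] := H v.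
  by exists (u w + (m * n.+1)%N%:Z), w, m; split => //; left.
by exists (u w - (m * n.+1)%N%:Z), w, m; split => //; right.
Qed.

Lemma Lv_fun v z1 z2 : Lv v z1 -> Lv v z2 -> z1 = z2.
Proof.
move=> [w1 [m1 [S1 H1]]] [w2 [m2 [S2 H2]]].
have O1 : orb v w1 by case: H1 => [[E _]|[E _]]; exists m1; [left|right].
have O2 : orb v w2 by case: H2 => [[E _]|[E _]]; exists m2; [left|right].
have E12 := S_unique _ _ S1 S2 (orb_trans _ _ _ (orb_sym _ _ O1) O2); subst w2.
case: H1 => [[E1 ->]|[E1 ->]]; case: H2 => [[E2 ->]|[E2 ->]].
- by rewrite (iter_eq _ _ _ (etrans E1 (esym E2))).
- have : iter (m1 + m2) tau w1 = iter 0 tau w1 by rewrite iterD E2 E1.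
  move/iter_eq => h; have -> : m1 = 0%N by lia. have -> : m2 = 0%N by lia. by rewrite !mul0n.
- have : iter (m2 + m1) tau w1 = iter 0 tau w1 by rewrite iterD E1 E2.
  move/iter_eq => h; have -> : m1 = 0%N by lia. have -> : m2 = 0%N by lia. by rewrite !mul0n.
- by rewrite (iter_eq _ _ _ (etrans E1 (esym E2))).
Qed.

Definition U v := proj1_sig (constructive_indefinite_description _ (Lv_ex v)).

Lemma U_spec v : Lv v (U v).
Proof. by rewrite /U; case: constructive_indefinite_description. Qed.

Lemma U_eq v z : Lv v z -> U v = z.
Proof. by move=> H; apply: Lv_fun (U_spec v) H. Qed.

Lemma U_S s : S s -> U s = u s.
Proof. by move=> Ss; apply: U_eq; exists s, 0%N; split => //; left; rewrite mul0n addr0. Qed.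

Lemma U_tau v : U (tau v) = U v - n.+1%:Z.
Proof.
apply: U_eq; have [w [m [Sw [[E ->]|[E ->]]]]] := U_spec v; exists w.
  case: m E => [|m] E.
    by exists 1%N; split => //; right; move: E => /= ->; rewrite mul0n mul1n; split => //; lia.
  by exists m; split => //; left; rewrite -iterSr E; split => //; rewrite mulSn; lia.
by exists m.+1; split => //; right; rewrite iterS E; split => //; rewrite mulSn; lia.
Qed.

Lemma U_ti v : U (ti v) = U v + n.+1%:Z.
Proof. by rewrite -{2}(Hkt v) U_tau; lia. Qed.

Lemma U_iter m v : U (iter m tau v) = U v - (m * n.+1)%N%:Z.
Proof. by elim: m => [|m IH] /=; rewrite ?U_tau ?IH ?mulSn; lia. Qed.

Lemma U_iti m v : U (iter m ti v) = U v + (m * n.+1)%N%:Z.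
Proof. by elim: m => [|m IH] /=; rewrite ?U_ti ?IH ?mulSn; lia. Qed.

Lemma arrow_iter m (b : A) : exists b', src b' = iter m tau (src b) /\ tgt b' = iter m tau (tgt b).
Proof.
elim: m => [|m [b1 [E1 E2]]]; first by exists b.
have [b' [F1 F2]] := K_tau b1; exists b'; by rewrite F1 F2 E1 E2.
Qed.

Lemma arrow_iti m (b : A) : exists b', src b' = iter m ti (src b) /\ tgt b' = iter m ti (tgt b).
Proof.
elim: m => [|m [b1 [E1 E2]]]; first by exists b.
have [b' [F1 F2]] := K_ti b1; exists b'; by rewrite F1 F2 E1 E2.
Qed.

Lemma arrow_path_valid (b : A) : pvalid src tgt (arrow_path src b).
Proof. by rewrite /pvalid /= eqxx. Qed.

Lemma U_arrowS (b : A) : S (src b) -> U (tgt b) = u (src b) + 1.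
Proof.
move=> Ss; set w' := tgt b.
have [t [m [St [[E ->]|[E ->]]]]] := U_spec w'.
- case: m E => [|m] E.
    rewrite mul0n addr0 /=; move: E => /= E; rewrite -E; apply: Hu => //.
    by rewrite -/w' E.
  (* path t ~> tau w' ~> s *)
  have [f [Hfv Hfs Hfe Hfl]] := K_mesh b.
  have [p [Hpv Hps Hpe Hpl]] := path_iter m (tau w').
  rewrite -iterSr E in Hps.
  have Hq : pvalid src tgt (pc p f) by apply: pvalid_pc => //; rewrite Hpe Hfs.
  have Hqs : S (pstart (pc p f)) by rewrite pstart_pc Hps.
  have Hqe : S (pend tgt (pc p f)) by rewrite pend_pc ?Hfe // Hpe Hfs.
  have Stw : S (tau w').
    apply: (S_convex _ Hq Hqs Hqe); apply: pverts_pcl; rewrite -Hpe; exact: pend_in.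
  have Etw : tau w' = t by apply: S_unique => //; exists m; left; rewrite -iterSr.
  have Hm : m = 0%N by apply: (@no_fix m t); rewrite -{1}Etw -iterSr.
  subst m; rewrite mul1n.
  have Sf : forall v, v \in pverts tgt f -> S v.
    apply: S_convex => //; by rewrite ?Hfs ?Etw ?Hfe.
  have [G _] := path_grade_p Hu Hfv Sf.
  rewrite Hfe Hfs Etw Hfl in G; rewrite G; lia.
- case: m E => [|m] E.
    rewrite mul0n subr0 /=; move: E => /= E; rewrite E; apply: Hu => //.
    by rewrite -/w' -E.
  exfalso.
  have [p [Hpv Hps Hpe Hpl]] := path_iter m.+1 t.
  have Hq : pvalid src tgt (pc (arrow_path src b) p).
    by apply: pvalid_pc => //; [exact: arrow_path_valid | rewrite Hps E].
  have Sw : S w'.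
    apply: (S_convex _ Hq) => //; first by rewrite pend_pc ?Hpe // Hps E.
    apply: pverts_pcr; first by rewrite Hps E.
    by rewrite -E -Hps; exact: pstart_in.
  have Ew : w' = t by apply: S_unique => //; exists m.+1; right.
  by rewrite Ew in E; have := no_fix _ _ E.
Qed.

Lemma U_arrow (b : A) : U (tgt b) = U (src b) + 1.
Proof.
have [w [m [Sw [[E HU]|[E HU]]]]] := U_spec (src b).
  have [b' [E1 E2]] := arrow_iter m b.
  have H := U_arrowS b'; rewrite E1 E2 E U_iter in H.
  have := H Sw; rewrite HU; lia.
have [b' [E1 E2]] := arrow_iti m b.
have H := U_arrowS b'; rewrite E1 E2 -E iter_tk U_iti in H.
have := H Sw; rewrite HU; lia.
Qed.

Lemma U_nice : nice_grading src tgt (fun _ => True) U.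
Proof. by move=> b _ _; apply: U_arrow. Qed.


Variable x0 : V.
Hypothesis Sx0 : S x0.
Definition c0 := u x0.
Definition W v : Prop := c0 <= U v <= c0 + n%:Z.

Lemma W_unique x y : W x -> W y -> orb x y -> x = y.
Proof.
rewrite /W => Hx Hy [m [E|E]].
  move: Hy; rewrite -E U_iter => Hy.
  have Hm : m = 0%N by nia.
  by rewrite Hm.
move: Hx; rewrite -E U_iter => Hx.
have Hm : m = 0%N by nia.
by rewrite Hm.
Qed.

Lemma W_rep v : exists z, W z /\ orb v z.
Proof.
set q := ((U v - c0) %/ n.+1%:Z)%Z.
case: (lerP 0 q) => Hq.
  exists (iter `|q|%N tau v); split; last exact: orb_iter.
  rewrite /W U_iter; rewrite /q in Hq *; lia.
exists (iter `|q|%N ti v); split; last exact: orb_iti.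
rewrite /W U_iti; rewrite /q in Hq *; lia.
Qed.

Definition inv (l : seq V) := (forall v, exists x, x \in l /\ orb v x) /\
  (forall x y, x \in l -> y \in l -> orb x y -> x = y).
Definition out x : nat := if (U x < c0)%R then absz (c0 - U x)%R
  else if (c0 + n%:Z < U x)%R then absz (U x - (c0 + n%:Z))%R else 0%N.
Definition mu l := sumn (map out l).

Lemma out0 x : out x = 0%N -> W x.
Proof. rewrite /out /W; case: ifP => h1; [|case: ifP => h2]; lia. Qed.

Lemma W_out x : W x -> out x = 0%N.
Proof. rewrite /out /W; case: ifP => h1; [|case: ifP => h2]; lia. Qed.

Lemma list_min (l : seq V) : l != [::] -> exists j, j \in l /\ forall y, y \in l -> U j <= U y.
Proof.
elim: l => // a l IH _; case: (eqVneq l [::]) => [->|Hl].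
  by exists a; split; rewrite ?mem_seq1 // => y; rewrite mem_seq1 => /eqP ->; lia.
have [j [Hj Hmin]] := IH Hl.
case: (lerP (U a) (U j)) => h.
  exists a; split; first exact: mem_head.
  move=> y; rewrite in_cons => /orP[/eqP ->|/Hmin]; lia.
exists j; split; first by rewrite in_cons Hj orbT.
move=> y; rewrite in_cons => /orP[/eqP ->|/Hmin]; lia.
Qed.

Lemma list_max (l : seq V) : l != [::] -> exists j, j \in l /\ forall y, y \in l -> U y <= U j.
Proof.
elim: l => // a l IH _; case: (eqVneq l [::]) => [->|Hl].
  by exists a; split; rewrite ?mem_seq1 // => y; rewrite mem_seq1 => /eqP ->; lia.
have [j [Hj Hmax]] := IH Hl.
case: (lerP (U j) (U a)) => h.
  exists a; split; first exact: mem_head.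
  move=> y; rewrite in_cons => /orP[/eqP ->|/Hmax]; lia.
exists j; split; first by rewrite in_cons Hj orbT.
move=> y; rewrite in_cons => /orP[/eqP ->|/Hmax]; lia.
Qed.

Lemma mu_le (f : V -> V) l : (forall y, out (f y) <= out y)%N -> (mu (map f l) <= mu l)%N.
Proof. move=> H; rewrite /mu; elim: l => //= a l IH; have := H a; lia. Qed.

Lemma mu_lt (f : V -> V) j l : j \in l -> (out (f j) < out j)%N ->
  (forall y, out (f y) <= out y)%N -> (mu (map f l) < mu l)%N.
Proof.
move=> Hj Hlt H; elim: l Hj => // a l IH; rewrite in_cons /= => /orP[/eqP Ej|Hj].
  subst a; have := mu_le f l H; rewrite /mu /=; rewrite /mu in IH; lia.
have := IH Hj; have := H a; rewrite /mu /=; rewrite /mu in IH; lia.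
Qed.

Lemma inv_map (f : V -> V) j l : inv l -> j \in l -> orb j (f j) ->
  (forall y, y != j -> f y = y) -> inv (map f l).
Proof.
move=> [Hc Hu'] Hj Hfj Hf.
have Ho : forall x, orb x (f x).
  move=> x; case: (eqVneq x j) => [->|h]; first exact: Hfj.
  by rewrite Hf //; apply: orb_refl.
split.
  move=> v; have [x [Hx Ox]] := Hc v; exists (f x); split; first exact: map_f.
  exact: orb_trans Ox (Ho x).
move=> x' y' /mapP [x Hx ->] /mapP [y Hy ->] Oxy.
have : x = y.
  apply: Hu' => //; apply: orb_trans (Ho x) _; apply: orb_trans Oxy _; exact: orb_sym.
by move=> ->.
Qed.

Lemma step_low l (P : V -> Prop) j : inv l -> (forall v, P v <-> v \in l) -> j \in l ->
  (forall y, y \in l -> U j <= U y) ->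
  tau_mutation src tgt tau P (fun v => v \in map (fun y => if y == j then ti j else y) l).
Proof.
move=> Hinv HP Hj Hmin; exists j; right; split.
  split; first by apply (proj2 (HP _)).
  move=> a Ea /(proj1 (HP _)) /Hmin; rewrite -Ea U_arrow; lia.
move=> v; split.
  move=> /mapP [y Hy ->]; case: (eqVneq y j) => [_|h]; first by right; rewrite Hkt.
  by left; split; [apply (proj2 (HP _)) | apply/eqP].
case=> [[/(proj1 (HP _)) Hv Hne]|Ev].
  apply/mapP; exists v => //; case: eqP => // E; by case: Hne.
apply/mapP; exists j; rewrite ?eqxx //; by rewrite -Ev Htk.
Qed.

Lemma step_high l (P : V -> Prop) j : inv l -> (forall v, P v <-> v \in l) -> j \in l ->
  (forall y, y \in l -> U y <= U j) ->
  tau_mutation src tgt tau P (fun v => v \in map (fun y => if y == j then tau j else y) l).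
Proof.
move=> Hinv HP Hj Hmax; exists j; left; split.
  split; first by apply (proj2 (HP _)).
  move=> a Ea /(proj1 (HP _)) /Hmax; rewrite -Ea U_arrow; lia.
move=> v; split.
  move=> /mapP [y Hy ->]; case: (eqVneq y j) => [_|h]; first by right.
  by left; split; [apply (proj2 (HP _)) | apply/eqP].
case=> [[/(proj1 (HP _)) Hv Hne]|Ev].
  apply/mapP; exists v => //; case: eqP => // E; by case: Hne.
apply/mapP; exists j; rewrite ?eqxx //.
Qed.

Lemma done_case l (P : V -> Prop) : (forall x, x \in l -> out x = 0%N) -> inv l ->
  (forall v, P v <-> v \in l) ->
  exists S', clos_refl_trans (V -> Prop) (tau_mutation src tgt tau) P S' /\ (forall v, S' v <-> W v).
Proof.
move=> H0 [Hc Hu'] HP; exists P; split; first exact: rt_refl.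
move=> v; split; first by move/(proj1 (HP _)) => /H0; apply: out0.
move=> Wv; have [x [Hx Ox]] := Hc v.
have -> : v = x by apply: W_unique => //; apply: out0; apply: H0.
by apply (proj2 (HP _)).
Qed.

Lemma process N : forall l (P : V -> Prop), (mu l <= N)%N -> inv l -> (forall v, P v <-> v \in l) ->
  exists S', clos_refl_trans (V -> Prop) (tau_mutation src tgt tau) P S' /\ (forall v, S' v <-> W v).
Proof.
elim: N => [|N IH] l P Hmu Hinv HP.
  apply: (done_case _ _ _ Hinv HP) => x Hx.
  elim: l Hx Hmu {Hinv HP} => // a l IHl; rewrite in_cons /mu /= => /orP[/eqP ->|Hx]; first lia.
  move=> h; apply: IHl => //; rewrite /mu; lia.
case: (boolP (all (fun x => out x == 0%N) l)) => Hall.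
  by apply: (done_case _ _ _ Hinv HP) => x Hx; apply/eqP; move/allP: Hall; apply.
move/allPn: Hall => [x Hx Hox].
have Hl : l != [::] by case: l Hx {Hinv HP Hmu}.
have Hx' : (U x < c0) \/ (c0 + n%:Z < U x).
  move: Hox; rewrite /out; case: ifP => h1; [|case: ifP => h2]; try lia; by [].
case: Hx' => Hx'.
  have [j [Hj Hmin]] := list_min _ Hl.
  set f := fun y => if y == j then ti j else y.
  have Hlt : (mu (map f l) < mu l)%N.
    apply: (mu_lt f j l Hj).
      have := Hmin x Hx; rewrite /f eqxx /out U_ti.
      case: ifP => h1; [|case: ifP => h2]; case: ifP => h3; try case: ifP => h4; lia.
    move=> y; rewrite /f; case: eqP => [->|_]; last by [].
    have := Hmin x Hx; rewrite /out U_ti.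
    case: ifP => h1; [|case: ifP => h2]; case: ifP => h3; try case: ifP => h4; lia.
  have Hinv' : inv (map f l).
    apply: (inv_map f j l Hinv Hj); first by rewrite /f eqxx; exact: (orb_iti 1%N j).
    by move=> y /negbTE; rewrite /f => ->.
  have [S' [H1 H2]] := IH (map f l) (fun v => v \in map f l) ltac:(lia) Hinv' (fun v => conj id id).
  exists S'; split => //; apply: rt_trans H1; apply: rt_step; exact: step_low.
have [j [Hj Hmax]] := list_max _ Hl.
set f := fun y => if y == j then tau j else y.
have Hlt : (mu (map f l) < mu l)%N.
  apply: (mu_lt f j l Hj).
    have := Hmax x Hx; rewrite /f eqxx /out U_tau.
    case: ifP => h1; [|case: ifP => h2]; case: ifP => h3; try case: ifP => h4; lia.
  move=> y; rewrite /f; case: eqP => [->|_]; last by [].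
  have := Hmax x Hx; rewrite /out U_tau.
  case: ifP => h1; [|case: ifP => h2]; case: ifP => h3; try case: ifP => h4; lia.
have Hinv' : inv (map f l).
  apply: (inv_map f j l Hinv Hj); first by rewrite /f eqxx; exact: (orb_iter 1%N j).
  by move=> y /negbTE; rewrite /f => ->.
have [S' [H1 H2]] := IH (map f l) (fun v => v \in map f l) ltac:(lia) Hinv' (fun v => conj id id).
exists S'; split => //; apply: rt_trans H1; apply: rt_step; exact: step_high.
Qed.


Lemma crt_sym (R : V -> V -> Prop) : (forall x y, R x y -> R y x) ->
  forall x y, clos_refl_trans V R x y -> clos_refl_trans V R y x.
Proof.
move=> HR x y; elim => [a b /HR h|a|a b c _ H1 _ H2]; first exact: rt_step.
  exact: rt_refl.
exact: rt_trans H2 H1.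
Qed.

Lemma adjS_sym (P : V -> Prop) x y : adjS src tgt P x y -> adjS src tgt P y x.
Proof. by move=> [Px [Py [a [h|h]]]]; split => //; split => //; exists a; [right|left]. Qed.

Lemma W_nice : nice_grading src tgt W U.
Proof. by move=> a _ _; apply: U_arrow. Qed.

Lemma path_W v l : valid_from src tgt v l -> (forall x, x \in v :: map tgt l -> W x) ->
  clos_refl_trans V (adjS src tgt W) v (fend tgt v l).
Proof.
elim: l v => [|a l IH] v /=; first by move=> _ _; exact: rt_refl.
move=> /andP[/eqP sa Hv] HW; apply: rt_trans (IH _ Hv _).
  apply: rt_step; split; first by apply: HW; exact: mem_head.
  split; first by apply: HW; rewrite !in_cons eqxx orbT.
  by exists a; left.
by move=> x hx; apply: HW; rewrite in_cons hx orbT.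
Qed.

Lemma path_W' p : pvalid src tgt p -> (forall x, x \in pverts tgt p -> W x) ->
  clos_refl_trans V (adjS src tgt W) (pstart p) (pend tgt p).
Proof. case: p => v l; exact: path_W. Qed.

Lemma key_arrow (b : A) za zb : W za -> W zb -> orb (src b) za -> orb (tgt b) zb ->
  clos_refl_trans V (adjS src tgt W) za zb.
Proof.
move=> Wa Wb Oa Ob.
have [b' [Es Et Ow]] : exists b', [/\ src b' = za, orb (tgt b) (tgt b') & True].
  case: Oa => m [E|E].
    have [b' [E1 E2]] := arrow_iter m b; exists b'; split => //; first by rewrite E1 E.
    by rewrite E2; apply: orb_iter.
  have [b' [E1 E2]] := arrow_iti m b; exists b'; split => //; first by rewrite E1 -E iter_tk.
  by rewrite E2; apply: orb_iti.
have Ow' : orb (tgt b') zb by apply: orb_trans (orb_sym _ _ Et) Ob.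
have HU := U_arrow b'; rewrite Es in HU.
case: (ltrP (U za) (c0 + n%:Z)) => h.
  have Wt : W (tgt b') by move: Wa; rewrite /W HU; lia.
  have <- : tgt b' = zb by apply: W_unique.
  by apply: rt_step; split => //; split => //; exists b'; left.
have [f [Hfv Hfs Hfe Hfl]] := K_mesh b'.
have Wt : W (tau (tgt b')) by move: Wa; rewrite /W U_tau HU; lia.
have Ez : tau (tgt b') = zb.
  apply: W_unique => //; apply: orb_trans _ Ow'; apply: orb_sym; exact: (orb_iter 1%N).
apply: crt_sym; first by move=> ? ?; apply: adjS_sym.
rewrite -Ez -Hfs -Es -Hfe; apply: path_W' => //.
have [G1 G2] := path_grade_p U_nice Hfv (fun _ _ => I).
move=> x hx; have := G2 x hx; rewrite /W Hfs Hfl U_tau HU.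
move: Wa h; rewrite /W; lia.
Qed.

Lemma W_conn x y : W x -> W y -> clos_refl_trans V (adjS src tgt W) x y.
Proof.
have Hgen : forall a c, clos_refl_trans V (adjS src tgt S) a c -> forall za zc, W za -> W zc ->
    orb a za -> orb c zc -> clos_refl_trans V (adjS src tgt W) za zc.
  move=> a c; elim.
  - move=> p q [_ [_ [b [[<- <-]|[<- <-]]]]] za zc Wa Wc Oa Oc; first exact: key_arrow Oa Oc.
    apply: crt_sym; first by move=> ? ?; apply: adjS_sym.
    exact: key_arrow Oc Oa.
  - move=> p za zc Wa Wc Oa Oc.
    have -> : za = zc by apply: W_unique => //; apply: orb_trans (orb_sym _ _ Oa) Oc.
    exact: rt_refl.
  - move=> p q r _ IH1 _ IH2 za zc Wa Wc Oa Oc.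
    have [zq [Wq Oq]] := W_rep q.
    exact: rt_trans (IH1 _ _ Wa Wq Oa Oq) (IH2 _ _ Wq Wc Oq Oc).
have Hx0 : W x0 by rewrite /W U_S // /c0; lia.
have Hto : forall z, W z -> clos_refl_trans V (adjS src tgt W) z x0.
  move=> z Wz; case: Hsl => _ Hrep _; have [s [Ss Os]] := Hrep z.
  case: Hcon => _ Hc.
  apply: (Hgen s x0 (Hc s x0 Ss Sx0)) => //; [exact: orb_sym | exact: orb_refl].
move=> Wx Wy; apply: rt_trans (Hto _ Wx) _.
apply: crt_sym; first by move=> ? ?; apply: adjS_sym.
exact: Hto.
Qed.

Lemma W_depth : has_depth src tgt W n%:Z.
Proof.
have Hx0 : W x0 by rewrite /W U_S // /c0; lia.
split; first by split; [exists x0 | exact: W_conn].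
exists U; split; first exact: W_nice.
  have [p [Hv Hs He Hl]] := K_orbit (ti x0).
  have [p1 [p2 [[E Hv1 Hv2 Hl1] [Hs1 He1 He2]]]] := psplit Hv (m := n) ltac:(rewrite Hl; lia).
  have [G _] := path_grade_p U_nice Hv1 (fun _ _ => I).
  rewrite Hs1 Hs Hkt Hl1 in G.
  exists x0, (pend tgt p1); split => //; last by rewrite G; lia.
  by rewrite /W G U_S // /c0; lia.
by move=> x y; rewrite /W; lia.
Qed.


Lemma final_comb : exists S', clos_refl_trans (V -> Prop) (tau_mutation src tgt tau) S S' /\
  has_depth src tgt S' n%:Z.
Proof.
have Hrep : forall w, exists s, S s /\ orb w s by case: Hsl.
pose rep w := proj1_sig (constructive_indefinite_description _ (Hrep w)).
have Hr : forall w, S (rep w) /\ orb w (rep w).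
  by move=> w; rewrite /rep; case: constructive_indefinite_description.
case: Hfin => s0 Hs0.
pose l0 := map rep s0.
have HS : forall v, S v <-> v \in l0.
  move=> v; split.
    move=> Sv; have [w [Hw Ow]] := Hs0 v; have [Sr Or] := Hr w.
    have -> : v = rep w by apply: S_unique => //; exact: orb_trans Ow Or.
    exact: map_f.
  by move=> /mapP [w _ ->]; case: (Hr w).
have Hinv : inv l0.
  split.
    move=> v; have [w [Hw Ow]] := Hs0 v; exists (rep w); split; first exact: map_f.
    by apply: orb_trans Ow _; case: (Hr w).
  by move=> x y /(proj2 (HS _)) Sx /(proj2 (HS _)) Sy; apply: S_unique.
have [S' [H1 H2]] := process (mu l0) l0 S (leqnn _) Hinv HS.
exists S'; split => //; apply: has_depth_iff W_depth.
by move=> v; split => /H2.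
Qed.

End Comb2.


End Part4.
Import Part4.

Local Open Scope ring_scope.

Theorem proposition4p5 (k : fieldType) (V A : eqType) (src tgt : A -> V)
    (n : nat) (rho : lincomb V A k -> Prop) (tau : V -> V) (S : V -> Prop) :
  stable_translation_quiver src tgt n rho tau ->
  acyclic src tgt ->
  finitely_many_orbits tau ->
  complete_slice src tgt tau S ->
  nicely_graded src tgt S ->
  exists S' : V -> Prop,
    clos_refl_trans (V -> Prop) (tau_mutation src tgt tau) S S' /\
    has_depth src tgt S' n%:Z.
Proof.
move=> Hst Hac Hfin Hsl [Hcon [u Hu]].
case: Hst => _ Hrel [ti Htk Hkt] [Hrad Hex] Hpi.
pose B i := proj1_sig (constructive_indefinite_description _ (pii_iso (Hpi i))).
have HB : forall i, pii src tgt rho (tau i) i (B i).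
  by move=> i; rewrite /B; case: constructive_indefinite_description.
case: (Hcon) => [[x0 Sx0] _].
exact: (final_comb _ _ _ _ _ _ _ _ Htk Hkt Hac Hsl Hcon _ Hu Hfin
  (K_tau _ _ _ _ _ _ _ _ _ _ Hrel Htk Hkt Hrad Hex Hac Hsl Hcon _ HB)
  (K_ti _ _ _ _ _ _ _ _ _ _ Hrel Htk Hkt Hrad Hex Hac Hsl Hcon _ HB)
  (K_mesh _ _ _ _ _ _ _ _ _ _ Hrel Htk Hkt Hrad Hex Hac Hsl Hcon _ HB)
  (K_orbit _ _ _ _ _ _ _ _ _ _ Hrel Htk Hkt Hrad Hex Hac Hsl Hcon _ HB) _ Sx0).
Qed.
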